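(* Let $0 < \alpha < 10^{-6}$ and let $n, d \in \mathbb{N}$ satisfy $n/150 \le d \le n/3$. Let $V, W$ be a partition of a set of $n$ vertices with $|W| = d$ and $|V| = n-d$. Suppose that $H$ is a $3$-uniform hypergraph on vertex set $V \cup W$ in which every vertex is $\alpha$-good (with respect to $H_{n,d}(V,W)$). Then $H$ contains a matching of size $d$.
   Context: Given a partition $V, W$ of a set of $n$ vertices with $|W| = d \le n/3$, $H_{n,d}(V,W)$ denotes the $3$-uniform hypergraph on vertex set $V \cup W$ whose edges are exactly the $3$-sets with either exactly two vertices in $V$ and one in $W$, or exactly one vertex in $V$ and two in $W$. For a vertex $v$ of a $3$-uniform hypergraph $G$, $N_G(v)$ denotes the set of unordered pairs $\{a,b\}$ such that $\{v,a,b\}$ is an edge of $G$. For a $3$-uniform hypergraph $H$ on vertex set $V \cup W$, a vertex $v$ is $\alpha$-good if $|N_{H_{n,d}(V,W)}(v) \setminus N_H(v)| \le \alpha n^2$, and $\alpha$-bad otherwise. *)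

(* Defs.v *)
From HB Require Import structures.
From mathcomp Require Import all_boot all_order all_algebra.
Set Implicit Arguments. Unset Strict Implicit. Unset Printing Implicit Defensive.
Import Order.TTheory GRing.Theory Num.Theory.

Definition uniform3 (T : finType) (H : {set {set T}}) : bool :=
  [forall e in H, #|e| == 3].

Definition Hnd (T : finType) (W : {set T}) : {set {set T}} :=
  [set e : {set T} | (#|e| == 3) &&
     (((#|e :&: ~: W| == 2) && (#|e :&: W| == 1)) ||
      ((#|e :&: ~: W| == 1) && (#|e :&: W| == 2)))].

Definition link (T : finType) (G : {set {set T}}) (v : T) : {set {set T}} :=
  [set P : {set T} | (#|P| == 2) && (v \notin P) && (v |: P \in G)].

Definition good (R : realFieldType) (T : finType) (W : {set T})
    (H : {set {set T}}) (alpha : R) (v : T) : Prop :=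
  (#|link (Hnd W) v :\: link H v|%:R <= alpha * (#|T|%:R ^+ 2))%R.

Definition matching (T : finType) (H M : {set {set T}}) : bool :=
  (M \subset H) &&
  [forall e1 in M, forall e2 in M, (e1 != e2) ==> [disjoint e1 & e2]].

(* Main.v *)
Require Import Defs.
From Stdlib Require Import Lia Psatz ZArith.
From HB Require Import structures.
From mathcomp Require Import all_boot all_order all_algebra.
Set Implicit Arguments. Unset Strict Implicit. Unset Printing Implicit Defensive.

Section Ar.
Local Open Scope Z_scope.
Lemma numZ (u k n d cw cx cy : Z) :
  0 <= u -> 0 <= k -> 0 <= n -> 0 <= d -> 0 <= cw -> 0 <= cx -> 0 <= cy ->
  u*u <= u + 2*cw -> k*k <= k + cw+cx+cy ->
  1000000*cw <= n*n -> 1000000*cx <= n*n -> 1000000*cy <= n*n ->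
  n - d <= u + 2*k -> k + 1 <= d -> 3*d <= n -> 2 <= u -> False.
Proof.
intros.
assert (1 <= cw) by nia.
assert (1000 <= n) by nia.
assert (100*u <= n).
{ destruct (Z_le_gt_dec (100*u) n) as [h|h]; [exact h|exfalso].
  assert (11 <= u) by lia.
  assert (11*(u*(u-1)) >= 10*(u*u)) by nia.
  assert (10000*(u*u) > n*n) by nia.
  nia. }
assert (600*k >= 197*n) by lia.
assert (k >= 328) by lia.
assert (1000*(k*k-k) >= 997*(k*k)) by nia.
assert (360000*(k*k) >= 38809*(n*n)) by nia.
nia.
Qed.
End Ar.


Lemma arith_u2 (a b u k n : nat) : a + b = n -> 3 * a <= n -> b <= u + 2 * k -> k < a -> 1 < u.
Proof.
move=> h1 /leP h2 /leP h3 /leP h4; apply/leP; rewrite -?plusE -?multE in h1 h2 h3 h4 *; lia.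
Qed.

Lemma arith_final (u k n a b cw cx cy : nat) :
  u * u <= u + 2 * cw -> k * k <= k + (cw + cx + cy) ->
  1000 * 1000 * cw <= n * n -> 1000 * 1000 * cx <= n * n -> 1000 * 1000 * cy <= n * n ->
  a + b = n -> 3 * a <= n -> b <= u + 2 * k -> k < a -> 1 < u -> False.
Proof.
move=> /leP h1 /leP h2 /leP h3 /leP h4 /leP h5 h6 /leP h7 /leP h8 /leP h9 /leP h10.
rewrite -?plusE -?multE in h1 h2 h3 h4 h5 h6 h7 h8 h9 h10.
apply (@numZ (Z.of_nat u) (Z.of_nat k) (Z.of_nat n) (Z.of_nat a) (Z.of_nat cw) (Z.of_nat cx) (Z.of_nat cy)); lia.
Qed.

Section Main.
Variables (T : finType) (t0 : T) (W : {set T}) (H : {set {set T}}).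

Lemma disjP (A B : {set T}) :
  reflect (forall x, x \in A -> x \in B -> False) [disjoint A & B].
Proof.
rewrite disjoints_subset; apply: (iffP subsetP) => h x.
  by move=> /h; rewrite inE => /negP.
by move=> hA; rewrite inE; apply/negP; apply: h.
Qed.

Lemma Hnd3 w a b : w \in W -> a \notin W -> b \notin W -> a != b ->
  [set w; a; b] \in Hnd W.
Proof.
move=> hw ha hb hab.
have wa : w != a by apply: contraNneq ha => <-.
have wb : w != b by apply: contraNneq hb => <-.
have e1 : [set w; a; b] :&: ~: W = [set a; b].
  apply/setP=> z; rewrite !inE; have [->|zw] := eqVneq z w; first by rewrite hw /= (negbTE wa) (negbTE wb).
  rewrite /=; have [->|] := eqVneq z a; first by rewrite ha.
  by have [->|] := eqVneq z b; [rewrite hb|].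
have e2 : [set w; a; b] :&: W = [set w].
  apply/setP=> z; rewrite !inE; have [->|zw] := eqVneq z w; first by rewrite hw.
  rewrite /=; have [->|] := eqVneq z a; first by rewrite (negbTE ha).
  by have [->|] := eqVneq z b; [rewrite (negbTE hb)|].
have e3 : [set w; a; b] = w |: [set a; b] by rewrite setUA.
by rewrite inE e1 e2 cards2 cards1 hab e3 cardsU1 cards2 hab !inE negb_or wa wb.
Qed.

Lemma L1 w a b : w \in W -> a \notin W -> b \notin W -> a != b ->
  [set a; b] \in link (Hnd W) w.
Proof.
move=> hw ha hb hab.
have wa : w != a by apply: contraNneq ha => <-.
have wb : w != b by apply: contraNneq hb => <-.
have h := Hnd3 hw ha hb hab; rewrite -setUA in h.
by rewrite inE cards2 hab h andbT !inE negb_or wa wb.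
Qed.

Lemma L2 v w a : v \notin W -> w \in W -> a \notin W -> v != a ->
  [set w; a] \in link (Hnd W) v.
Proof.
move=> hv hw ha hva.
have wa : w != a by apply: contraNneq ha => <-.
have vw : v != w by apply: contraNneq hv => ->.
have h := Hnd3 hw hv ha hva.
have e : v |: [set w; a] = [set w; v; a].
  by apply/setP=> z; rewrite !inE; case: (z == v); case: (z == w).
by rewrite inE cards2 wa e h andbT !inE negb_or vw hva.
Qed.

Lemma L2' v w a : v \notin W -> w \in W -> a \notin W -> v != a ->
  [set a; w] \in link (Hnd W) v.
Proof. by move=> *; rewrite setUC; apply: L2. Qed.

Definition cond (e : {set T}) w a b :=
  [&& w \in W, a \notin W, b \notin W, a != b & e == [set w; a; b]].
Definition wvv e := [exists t : T * T * T, cond e t.1.1 t.1.2 t.2].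
Definition trip e := odflt (t0, t0, t0) [pick t : T * T * T | cond e t.1.1 t.1.2 t.2].
Definition wv e := (trip e).1.1.
Definition av e := (trip e).1.2.
Definition bv e := (trip e).2.

Lemma tripP e : wvv e -> cond e (wv e) (av e) (bv e).
Proof.
rewrite /wv /av /bv /trip; case: pickP => [t ht|none] //=.
by case/existsP=> t; rewrite none.
Qed.

Lemma wvvI e w a b : cond e w a b -> wvv e.
Proof. by move=> h; apply/existsP; exists (w, a, b). Qed.

Lemma vert_in e : wvv e ->
  [/\ wv e \in e, av e \in e & bv e \in e].
Proof.
by move/tripP; move: (wv e) (av e) (bv e) => w a b /and5P[_ _ _ _ /eqP->]; rewrite !inE !eqxx ?orbT.
Qed.

Lemma vert_W e : wvv e ->
  [/\ wv e \in W, av e \notin W, bv e \notin W & av e != bv e].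
Proof. by move/tripP=> /and5P[]. Qed.

Lemma vert_neq e : wvv e ->
  [/\ wv e <> av e, wv e <> bv e & av e <> bv e].
Proof.
move=> /vert_W[hw ha hb hab]; split.
- by move=> h; move: ha; rewrite -h hw.
- by move=> h; move: hb; rewrite -h hw.
- exact/eqP.
Qed.

Lemma vert_cases e v : wvv e -> v \in e -> [\/ v = wv e, v = av e | v = bv e].
Proof.
move/tripP; move: (wv e) (av e) (bv e) => w a b /and5P[_ _ _ _ /eqP->].
by rewrite !inE => /orP[/orP[]|] /eqP->; [apply: Or31|apply: Or32|apply: Or33].
Qed.

Definition PM (M : {set {set T}}) := matching H M && [forall e in M, wvv e].

Lemma PM_H (M : {set {set T}}) e : PM M -> e \in M -> e \in H.
Proof. by case/andP=> /andP[/subsetP h _] _; apply: h. Qed.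

Lemma PM_wvv (M : {set {set T}}) e : PM M -> e \in M -> wvv e.
Proof. by case/andP=> _ /forall_inP h; apply: h. Qed.

Lemma PM_disj (M : {set {set T}}) e1 e2 : PM M -> e1 \in M -> e2 \in M -> e1 != e2 ->
  [disjoint e1 & e2].
Proof.
case/andP=> /andP[_ /forall_inP h] _ h1 h2 ne.
by move: (h _ h1) => /forall_inP /(_ _ h2) /implyP; apply.
Qed.

Lemma PM_intro (M : {set {set T}}) :
  (forall e, e \in M -> e \in H) -> (forall e, e \in M -> wvv e) ->
  (forall e1 e2, e1 \in M -> e2 \in M -> e1 != e2 -> [disjoint e1 & e2]) ->
  PM M.
Proof.
move=> hH hw hd; apply/andP; split; last by apply/forall_inP.
apply/andP; split; first by apply/subsetP.
apply/forall_inP=> e1 h1; apply/forall_inP=> e2 h2; apply/implyP; exact: hd.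
Qed.

Lemma PM_sub (M M' : {set {set T}}) : PM M -> M' \subset M -> PM M'.
Proof.
move=> hP /subsetP s; apply: PM_intro.
- by move=> e /s; apply: PM_H hP.
- by move=> e /s; apply: PM_wvv hP.
- by move=> e1 e2 /s h1 /s h2; apply: PM_disj hP h1 h2.
Qed.

Lemma PM_add (M : {set {set T}}) e : PM M -> e \in H -> wvv e ->
  (forall f, f \in M -> [disjoint e & f]) ->
  PM (e |: M) /\ #|e |: M| = #|M|.+1.
Proof.
move=> hP hH hw hd.
have eM : e \notin M.
  apply/negP=> /hd /disjP h.
  by case: (vert_in hw) => h1 _ _; apply: (h _ h1 h1).
split; last by rewrite cardsU1 eM.
apply: PM_intro.
- by move=> f; rewrite in_setU1 => /predU1P[->|]; [|apply: PM_H].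
- by move=> f; rewrite in_setU1 => /predU1P[->|]; [|apply: PM_wvv].
- move=> e1 e2; rewrite !in_setU1 => /predU1P[->|h1] /predU1P[->|h2] ne.
  + by rewrite eqxx in ne.
  + exact: hd.
  + by rewrite disjoint_sym; apply: hd.
  + exact: PM_disj hP h1 h2 ne.
Qed.

Definition own (M : {set {set T}}) v := odflt set0 [pick e in M | v \in e].

Lemma own_in (M : {set {set T}}) e v : PM M -> e \in M -> v \in e -> own M v = e.
Proof.
move=> hP he hv; rewrite /own; case: pickP => [f /andP[hf hvf]|none] /=.
  apply/eqP; apply: contraT => ne.
  by move/disjP: (PM_disj hP hf he ne) => /(_ v hvf hv).
by move: (none e); rewrite he hv.
Qed.

Lemma own_out (M : {set {set T}}) v : (forall e, e \in M -> v \notin e) -> own M v = set0.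
Proof.
move=> h; rewrite /own; case: pickP => [f /andP[hf hvf]|none] //=.
by move: (h f hf); rewrite hvf.
Qed.

Lemma M_ne0 (M : {set {set T}}) e : PM M -> e \in M -> e <> set0.
Proof.
move=> hP he e0; case: (vert_in (PM_wvv hP he)) => h _ _.
by move: h; rewrite e0 inE.
Qed.

Lemma own_vert (M : {set {set T}}) e : PM M -> e \in M ->
  [/\ own M (wv e) = e, own M (av e) = e & own M (bv e) = e].
Proof.
move=> hP he; case: (vert_in (PM_wvv hP he)) => h1 h2 h3.
by split; apply: own_in.
Qed.


Definition c v := #|link (Hnd W) v :\: link H v|.

Lemma countF (M : {set {set T}}) (f g : {set T} -> T) v
    (D : {set {set T} * {set T}}) :
  PM M ->
  (forall p, p \in D -> [/\ p.1 \in M, p.2 \in M & p.1 != p.2]) ->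
  (forall e, e \in M -> own M (f e) = e /\ own M (g e) = e) ->
  (forall e, e \in M -> f e <> g e) ->
  (forall p, p \in D -> [set f p.1; g p.2] \in link (Hnd W) v) ->
  #|[set p in D | [set f p.1; g p.2] \notin link H v]| <= c v.
Proof.
move=> hP hD hown hfg hL.
rewrite -(card_in_imset (f := fun p => [set f p.1; g p.2])).
  apply: subset_leq_card; apply/subsetP=> P /imsetP[p]; rewrite inE => /andP[hp hn] ->.
  by rewrite inE hn hL.
move=> [e1 e2] [e1' e2']; rewrite !inE => /andP[/hD [/= h1 h2 n12] _] /andP[/hD [/= h1' h2' n12'] _] /= heq.
move: (hown _ h1) (hown _ h2) (hown _ h1') (hown _ h2') => [o1 o2] [o3 o4] [o5 o6] [o7 o8].
have hf1 := hfg _ h1.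
have m1 : f e1 \in [set f e1'; g e2'] by rewrite -heq !inE eqxx.
have m2 : g e2 \in [set f e1'; g e2'] by rewrite -heq !inE eqxx orbT.
move/eqP: n12 => n12; move/eqP: n12' => n12'.
move: m1 m2; rewrite !inE => /orP[] /eqP q1 /orP[] /eqP q2; congruence.
Qed.

Definition unc (M : {set {set T}}) v := [forall e in M, v \notin e].

Lemma cntW (M : {set {set T}}) : PM M ->
  #|W| <= #|[set v in W | unc M v]| + #|M|.
Proof.
move=> hP.
apply: (@leq_trans #|[set v in W | unc M v] :|: wv @: M|).
  apply: subset_leq_card; apply/subsetP=> v hv; rewrite !inE hv /=.
  case: (boolP (unc M v)) => //= /forall_inPn [e he]; rewrite negbK => hve.
  have hw := PM_wvv hP he.
  case: (vert_cases hw hve) => e'; rewrite e' in hv *; first by rewrite imset_f.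
  - by case: (vert_W hw) => _ ha _ _; move: hv; rewrite (negbTE ha) .
  - by case: (vert_W hw) => _ _ hb _; move: hv; rewrite (negbTE hb).
by rewrite cardsU (leq_trans (leq_subr _ _)) // leq_add2l leq_imset_card.
Qed.

Lemma cntV (M : {set {set T}}) : PM M ->
  #|~: W| <= #|[set v in ~: W | unc M v]| + 2 * #|M|.
Proof.
move=> hP.
apply: (@leq_trans #|[set v in ~: W | unc M v] :|: (av @: M :|: bv @: M)|).
  apply: subset_leq_card; apply/subsetP=> v; rewrite inE => hv; rewrite !inE hv /=.
  case: (boolP (unc M v)) => //= /forall_inPn [e he]; rewrite negbK => hve.
  have hw := PM_wvv hP he.
  case: (vert_cases hw hve) => e'; rewrite e' in hv *.
  - by case: (vert_W hw) => hw' _ _ _; move: hv; rewrite hw'.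
  - by rewrite imset_f.
  - by rewrite imset_f ?orbT.
rewrite cardsU (leq_trans (leq_subr _ _)) // leq_add2l mul2n -addnn.
by rewrite cardsU (leq_trans (leq_subr _ _)) // leq_add // leq_imset_card.
Qed.

Definition DD (M : {set {set T}}) := setX M M :\: [set (e, e) | e in M].

Lemma DD_mem M p : p \in DD M -> [/\ p.1 \in M, p.2 \in M & p.1 != p.2].
Proof.
case: p => e1 e2; rewrite !inE /= => /andP[hn /andP[h1 h2]]; split=> //.
by apply: contraNneq hn => <-; rewrite imset_f.
Qed.

Lemma DD_card M : #|DD M| = #|M| * #|M| - #|M|.
Proof.
rewrite /DD cardsD cardsX (setIidPr _) ?card_imset //; first by move=> x y [].
by apply/subsetP=> p /imsetP[e he ->]; rewrite inE /= he.
Qed.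


Lemma set3C_a (v p q : T) : v |: [set p; q] = [set p; v; q].
Proof. by apply/setP=> z; rewrite !inE; case: (z == v); case: (z == p). Qed.

Lemma set3C_b (v p q : T) : v |: [set q; p] = [set p; v; q].
Proof. by apply/setP=> z; rewrite !inE; case: (z == v); case: (z == p); case: (z == q). Qed.

Lemma disj33 (p q r s t u : T) :
  p != s -> p != t -> p != u -> q != s -> q != t -> q != u ->
  r != s -> r != t -> r != u -> [disjoint [set p; q; r] & [set s; t; u]].
Proof.
move=> *; apply/disjP=> z; rewrite !inE => /orP[/orP[]|] /eqP-> /orP[/orP[]|];
  by apply/negP.
Qed.

Lemma disj3M (M : {set {set T}}) f (p q r : T) : PM M -> f \in M ->
  own M p <> f -> own M q <> f -> own M r <> f -> [disjoint [set p; q; r] & f].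
Proof.
move=> hP hf h1 h2 h3; apply/disjP=> z; rewrite !inE => /orP[/orP[]|] /eqP-> hz.
- exact: h1 (own_in hP hf hz).
- exact: h2 (own_in hP hf hz).
- exact: h3 (own_in hP hf hz).
Qed.

Lemma binC2 u : u * u = u + 2 * 'C(u, 2).
Proof.
elim: u => [|u IH] //.
rewrite binS bin1 mulSn mulnS IH.
move: ('C(u, 2)) => C. rewrite -?plusE -?multE. lia.
Qed.

Lemma neq_own (M : {set {set T}}) a b ea eb :
  own M a = ea -> own M b = eb -> ea <> eb -> a <> b.
Proof. by move=> h1 h2 ne e; apply: ne; rewrite -h1 -h2 e. Qed.

Lemma neq_W a b : (a \in W) = true -> (b \in W) = false -> a <> b.
Proof. by move=> h1 h2 e; rewrite e h2 in h1. Qed.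

Ltac neq := first [ assumption | (apply: nesym; assumption)
  | (apply: neq_W; assumption) | (apply: nesym; apply: neq_W; assumption)
  | (apply: neq_own; [eassumption|eassumption|first [assumption | apply: nesym; assumption]]) ].

Ltac nof := match goal with
 | |- own _ ?p <> ?f =>
   match goal with H1 : own _ p = ?e, H2 : f <> ?e |- _ =>
     exact (fun h => H2 (etrans (esym h) H1)) end
 end.

Lemma step (M : {set {set T}}) :
  (forall v, 1000 * 1000 * c v <= #|T| * #|T|) -> 3 * #|W| <= #|T| ->
  PM M -> #|M| < #|W| -> exists M' : {set {set T}}, PM M' /\ #|M'| = #|M|.+1.
Proof.
move=> hc h3 hP hk.
set UW := [set v in W | unc M v].
set U := [set v in ~: W | unc M v].
have uncP v : unc M v -> forall e, e \in M -> v \notin e by move/forall_inP.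
have hUW : 0 < #|UW|.
  have := cntW hP; rewrite -/UW => h.
  rewrite lt0n; apply/eqP => h0; move: h; rewrite h0 add0n leqNgt hk //.
case/card_gt0P: hUW => w; rewrite inE => /andP[hwW hwu].
have hu2 : 1 < #|U|.
  apply: (@arith_u2 #|W| #|~: W| _ #|M| #|T|) => //; [exact: cardsC | exact: cntV].
have own_w : own M w = set0 := own_out (uncP _ hwu).
set S := [set P : {set T} | P \subset U & #|P| == 2].
have SinHnd : forall P, P \in S -> P \in link (Hnd W) w.
  move=> P; rewrite inE => /andP[sPU /cards2P[a [b [ab ePab]]]].
  have ha : a \in U by apply: (subsetP sPU); rewrite ePab !inE eqxx.
  have hb : b \in U by apply: (subsetP sPU); rewrite ePab !inE eqxx orbT.
  have ha' : a \notin W by move: ha; rewrite !inE => /andP[].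
  have hb' : b \notin W by move: hb; rewrite !inE => /andP[].
  by rewrite ePab; apply: L1.
case: (boolP [exists P in S, P \in link H w]) => [/exists_inP[P hPS hPH] | nodir].
  move: (hPS); rewrite inE => /andP[sPU /cards2P[a [b [ab ePab]]]].
  have ha : a \in U by apply: (subsetP sPU); rewrite ePab !inE eqxx.
  have hb : b \in U by apply: (subsetP sPU); rewrite ePab !inE eqxx orbT.
  move: ha hb; rewrite !inE => /andP[ha hau] /andP[hb hbu].
  have hE : [set w; a; b] \in H.
    by move: hPH; rewrite inE ePab => /andP[_ h]; rewrite setUA in h.
  have hcond : cond [set w; a; b] w a b by rewrite /cond hwW ha hb ab eqxx.
  have [hP' hc'] := PM_add hP hE (wvvI hcond) (fun f hf =>
      disj3M hP hf
        (fun h => M_ne0 hP hf (etrans (esym h) own_w))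
        (fun h => M_ne0 hP hf (etrans (esym h) (own_out (uncP _ hau))))
        (fun h => M_ne0 hP hf (etrans (esym h) (own_out (uncP _ hbu))))).
  by exists ([set w; a; b] |: M).
have hCu : 'C(#|U|, 2) <= c w.
  rewrite -cards_draws -/S; apply: subset_leq_card; apply/subsetP=> P hPS.
  rewrite inE SinHnd // andbT.
  by move/exists_inPn: nodir => /(_ P hPS).
case/card_gt1P: (hu2) => x [y [hxU hyU /eqP xy]].
move: hxU hyU; rewrite !inE => /andP[hxW hxu] /andP[hyW hyu].
have own_x : own M x = set0 := own_out (uncP _ hxu).
have own_y : own M y = set0 := own_out (uncP _ hyu).
have hwW' : (w \in W) = true := hwW.
have hxW' : (x \in W) = false := negbTE hxW.
have hyW' : (y \in W) = false := negbTE hyW.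
have V e : e \in M -> [/\ own M (wv e) = e, own M (av e) = e, own M (bv e) = e,
    e <> set0 & [/\ (wv e \in W) = true, (av e \in W) = false,
                    (bv e \in W) = false & av e <> bv e]].
  move=> he; have hw := PM_wvv hP he.
  case: (own_vert hP he) => o1 o2 o3; case: (vert_W hw) => w1 a1 b1 /eqP ab1.
  by split => //; [exact: M_ne0 hP he | split => //; apply: negbTE].
set D := DD M.
have HL1 p : p \in D -> [set av p.1; bv p.2] \in link (Hnd W) w.
  case/DD_mem => h1 h2 /eqP n12.
  case: (V _ h1) => o1 o2 o3 ne1 [W1 W2 W3 ab1].
  case: (V _ h2) => o4 o5 o6 ne2 [W4 W5 W6 ab2].
  by apply: L1 => //; [rewrite W2 | rewrite W6 | apply/eqP => h; congruence].
have HL2 p : p \in D -> [set wv p.1; av p.2] \in link (Hnd W) x.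
  case/DD_mem => h1 h2 /eqP n12.
  case: (V _ h1) => o1 o2 o3 ne1 [W1 W2 W3 ab1].
  case: (V _ h2) => o4 o5 o6 ne2 [W4 W5 W6 ab2].
  by apply: L2 => //; [rewrite W5 | apply/eqP => h; congruence].
have HL3 p : p \in D -> [set bv p.1; wv p.2] \in link (Hnd W) y.
  case/DD_mem => h1 h2 /eqP n12.
  case: (V _ h1) => o1 o2 o3 ne1 [W1 W2 W3 ab1].
  case: (V _ h2) => o4 o5 o6 ne2 [W4 W5 W6 ab2].
  by apply: L2' => //; [rewrite W3 | apply/eqP => h; congruence].
case: (boolP [exists p in D, [&& [set av p.1; bv p.2] \in link H w,
     [set wv p.1; av p.2] \in link H x & [set bv p.1; wv p.2] \in link H y]])
  => [/exists_inP[[e1 e2] hD /and3P[l1 l2 l3]] | nosw].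
  case: (DD_mem hD) => /= h1 h2 /eqP n12.
  case: (V _ h1) => o1 o2 o3 ne1 [W1 W2 W3 ab1].
  case: (V _ h2) => o4 o5 o6 ne2 [W4 W5 W6 ab2].
  set M0 := M :\ e1 :\ e2.
  have hM0 : PM M0 by apply: PM_sub hP _; apply: subset_trans (subsetDl _ _) (subsetDl _ _).
  have e21 : e2 != e1 by apply/eqP=> h; apply: n12; rewrite h.
  have cM : #|M| = #|M0|.+2.
    by rewrite (cardsD1 e1 M) h1 (cardsD1 e2 (M :\ e1)) in_setD1 e21 h2.
  have M0P f : f \in M0 -> [/\ f \in M, f <> e1, f <> e2 & f <> set0].
    rewrite !inE => /and3P[/eqP fe2 /eqP fe1 fM].
    by split => //; exact: M_ne0 hP fM.
  have hE1 : [set w; av e1; bv e2] \in H.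
    by move: l1; rewrite inE => /andP[_ h]; rewrite setUA in h.
  have hE2 : [set wv e1; x; av e2] \in H.
    by move: l2; rewrite inE => /andP[_ h]; rewrite set3C_a in h.
  have hE3 : [set wv e2; y; bv e1] \in H.
    by move: l3; rewrite inE => /andP[_ h]; rewrite set3C_b in h.
  have c1 : cond [set w; av e1; bv e2] w (av e1) (bv e2).
    rewrite /cond hwW W2 W6 eqxx /= andbT; apply/eqP => h; congruence.
  have c2 : cond [set wv e1; x; av e2] (wv e1) x (av e2).
    rewrite /cond W1 hxW' W5 eqxx /= andbT; apply/eqP => h; congruence.
  have c3 : cond [set wv e2; y; bv e1] (wv e2) y (bv e1).
    rewrite /cond W4 hyW' W3 eqxx /= andbT; apply/eqP => h; congruence.
  have [hM3 cM3] := PM_add hM0 hE3 (wvvI c3) (fun f hf =>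
     match M0P f hf with And4 fM f1 f2 f0 =>
       disj3M hP fM (fun h => f2 (etrans (esym h) o4))
                    (fun h => f0 (etrans (esym h) own_y))
                    (fun h => f1 (etrans (esym h) o3)) end).
  have d2 : forall f, f \in [set wv e2; y; bv e1] |: M0 ->
      [disjoint [set wv e1; x; av e2] & f].
    move=> f; rewrite !in_setU1 => /orP[/eqP->|hf].
    - by apply: disj33; apply/eqP; neq.
    - case: (M0P f hf) => fM f1 f2 f0.
      by apply: disj3M hP fM _ _ _; nof.
  have [hM2 cM2] := PM_add hM3 hE2 (wvvI c2) d2.
  have d1 : forall f, f \in [set wv e1; x; av e2] |: ([set wv e2; y; bv e1] |: M0) ->
      [disjoint [set w; av e1; bv e2] & f].
    move=> f; rewrite !in_setU1 => /orP[/eqP->|/orP[/eqP->|hf]].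
    - by apply: disj33; apply/eqP; neq.
    - by apply: disj33; apply/eqP; neq.
    - case: (M0P f hf) => fM f1 f2 f0.
      by apply: disj3M hP fM _ _ _; nof.
  have [hM1 cM1] := PM_add hM2 hE1 (wvvI c1) d1.
  exists ([set w; av e1; bv e2] |: ([set wv e1; x; av e2] |: ([set wv e2; y; bv e1] |: M0))).
  by split => //; rewrite cM1 cM2 cM3 cM.
exfalso.
have Vo e : e \in M -> own M (av e) = e /\ own M (bv e) = e.
  by move=> he; case: (V _ he).
have Vo2 e : e \in M -> own M (wv e) = e /\ own M (av e) = e.
  by move=> he; case: (V _ he).
have Vo3 e : e \in M -> own M (bv e) = e /\ own M (wv e) = e.
  by move=> he; case: (V _ he).
have F1 := countF hP (@DD_mem M) Vo (fun e he => match V e he with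
   And5 _ _ _ _ (And4 _ _ _ h) => h end) HL1.
have F2 := countF hP (@DD_mem M) Vo2 (fun e he =>
  let: And3 h _ _ := vert_neq (PM_wvv hP he) in h) HL2.
have F3 := countF hP (@DD_mem M) Vo3 (fun e he =>
  let: And3 _ h _ := vert_neq (PM_wvv hP he) in (fun q => h (esym q))) HL3.
have hsub : D \subset
   [set p in D | [set av p.1; bv p.2] \notin link H w] :|:
   [set p in D | [set wv p.1; av p.2] \notin link H x] :|:
   [set p in D | [set bv p.1; wv p.2] \notin link H y].
  apply/subsetP => p hp; move/exists_inPn: nosw => /(_ p hp) hn.
  rewrite !in_setU.
  case: (boolP ([set av p.1; bv p.2] \in link H w)) => i1; last first.
    by apply/orP; left; apply/orP; left; apply/setIdP.
  case: (boolP ([set wv p.1; av p.2] \in link H x)) => i2; last first.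
    by apply/orP; left; apply/orP; right; apply/setIdP.
  case: (boolP ([set bv p.1; wv p.2] \in link H y)) => i3; last first.
    by apply/orP; right; apply/setIdP.
  by move: hn; rewrite i1 i2 i3.
have cD : #|D| <= c w + c x + c y.
  apply: leq_trans (subset_leq_card hsub) _.
  rewrite cardsU (leq_trans (leq_subr _ _)) // leq_add //.
  by rewrite cardsU (leq_trans (leq_subr _ _)) // leq_add.
move: cD; rewrite /D DD_card leq_subLR => cD.
apply: (@arith_final #|U| #|M| #|T| #|W| #|~: W| (c w) (c x) (c y)) => //.
- by rewrite binC2 leq_add2l leq_mul2l hCu orbT.
- exact: cardsC.
- exact: cntV.
Qed.
End Main.

Lemma million : 1000000 = 1000 * 1000. Proof. by apply/eqP; vm_compute. Qed.

Import Order.TTheory GRing.Theory Num.Theory.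
Unset Implicit Arguments.

Theorem lemma4p2 (R : realFieldType) (alpha : R) (n d : nat)
    (T : finType) (W : {set T}) (H : {set {set T}}) :
  (0 < alpha)%R -> (alpha < 1 / 1000000%:R)%R ->
  (n%:R / 150%:R <= d%:R :> R)%R -> (d%:R <= n%:R / 3%:R :> R)%R ->
  #|T| = n -> #|W| = d ->
  uniform3 H ->
  (forall v : T, good W H alpha v) ->
  exists M : {set {set T}}, matching H M && (#|M| == d).
Proof.
move=> ha0 ha1 hlo hhi hT hW h3u hgood.
have h3 : 3 * #|W| <= #|T|.
  by move: hhi; rewrite ler_pdivlMr ?ltr0n // -natrM ler_nat mulnC hT hW.
have hc : forall v, 1000 * 1000 * c W H v <= #|T| * #|T|.
  move=> v; have := hgood v; rewrite /good => hv.
  have : ((c W H v)%:R <= (#|T|%:R ^+ 2) / 1000000%:R :> R)%R.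
    apply: (le_trans hv).
    rewrite (_ : ((#|T|%:R ^+ 2) / 1000000%:R = (#|T|%:R ^+ 2) * (1 / 1000000%:R) :> R)%R);
      last by rewrite mul1r.
    by rewrite mulrC ler_wpM2l ?exprn_ge0 ?ler0n // ltW.
  by rewrite ler_pdivlMr ?ltr0n // -natrX -natrM ler_nat -million mulnC expnS expn1.
case: (posnP d) => [d0 | dpos].
  exists set0; rewrite cards0 d0 eqxx andbT /matching sub0set /=.
  by apply/forall_inP => e; rewrite inE.
have : 0 < #|W| by rewrite hW.
case/card_gt0P => t0 _.
have main : forall j, j <= d -> exists M, PM W H M /\ #|M| = j.
  elim => [_|j IH hj].
    exists set0; split; last by rewrite cards0.
    by apply: PM_intro => e; rewrite inE.
  case: (IH (ltnW hj)) => M [hM cM].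
  have hk : #|M| < #|W| by rewrite cM hW.
  case: (step t0 hc h3 hM hk) => M' [hM' cM'].
  by exists M'; rewrite cM' cM.
case: (main d (leqnn d)) => M [hM cM].
exists M; rewrite cM eqxx andbT.
by case/andP: hM.
Qed.
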